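(* Let $\beta=1+\delta$ with $\delta=\delta(n)>0$ and $\delta^2n\to\infty$, and let $(S_t)$ be the normalized magnetization chain of the Glauber dynamics for the mean-field Ising model on $n$ vertices. Let $g(x)=\frac{\tanh(\beta x)-x}{1-x\tanh(\beta x)}$, $\zeta$ (the state nearest to) the unique positive root of $g$, $\tau_\zeta=\min\{t:S_t=\zeta\}$ and $t_{\mathrm{exp}}=\frac n\delta\exp\big(\frac n2\int_0^\zeta\log\frac{1+g(x)}{1-g(x)}dx\big)$. Then $\mathbb{E}_1\tau_\zeta=o(t_{\mathrm{exp}})$.
   Context: For $n\ge1$ and $\beta\ge0$, the mean-field Ising measure on $\{1,-1\}^n$ is $\mu_n(\sigma)\propto\exp\big(\frac{\beta}{n}\sum_{x<y}\sigma(x)\sigma(y)\big)$; the heat-bath Glauber dynamics chooses a uniform vertex and resamples its spin from $\mu_n$ conditioned on the other spins. The magnetization chain $S_t=\frac1n\sum_iX_t(i)$ is the birth-and-death chain on $\{-1,-1+\frac2n,\dots,1\}$ with $P(x,x+\frac2n)=\frac{1-x}{2}\cdot\frac{1+\tanh(\beta(x+1/n))}{2}$, $P(x,x-\frac2n)=\frac{1+x}{2}\cdot\frac{1-\tanh(\beta(x-1/n))}{2}$, remaining mass on $P(x,x)$. $\mathbb{E}_1$ denotes expectation for the chain started at $S_0=1$. *)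

(* Defs.v *)
From Stdlib Require Import Reals Lra Lia.
From Coquelicot Require Import Coquelicot.
Open Scope R_scope.

Definition tanh (x : R) : R := (exp x - exp (- x)) / (exp x + exp (- x)).

Definition gfun (beta x : R) : R :=
  (tanh (beta * x) - x) / (1 - x * tanh (beta * x)).

(* State of the magnetization chain with index k in {0..n}: x = -1 + 2k/n. *)
Definition st (n k : nat) : R := -1 + 2 * INR k / INR n.

Definition pup (beta : R) (n k : nat) : R :=
  let x := st n k in (1 - x) / 2 * ((1 + tanh (beta * (x + 1 / INR n))) / 2).
Definition pdown (beta : R) (n k : nat) : R :=
  let x := st n k in (1 + x) / 2 * ((1 - tanh (beta * (x - 1 / INR n))) / 2).
Definition pstay (beta : R) (n k : nat) : R := 1 - pup beta n k - pdown beta n k.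

(* killed[beta,n,kz] t k = P_1(S_t = st n k and S_s <> st n kz for all s <= t),
   the chain started at S_0 = 1 (index n). *)
Fixpoint killed (beta : R) (n kz : nat) (t k : nat) : R :=
  match t with
  | O => if Nat.eqb k n then (if Nat.eqb k kz then 0 else 1) else 0
  | S t' =>
      if Nat.eqb k kz then 0 else
      if Nat.leb k n then
        (match k with
         | O => 0
         | S k' => killed beta n kz t' k' * pup beta n k'
         end)
        + killed beta n kz t' k * pstay beta n k
        + (if Nat.leb (S k) n then killed beta n kz t' (S k) * pdown beta n (S k) else 0)
      else 0
  end.

(* P_1(tau_zeta > t), with tau_zeta = min { t >= 0 : S_t = st n kz } *)
Definition surv (beta : R) (n kz : nat) (t : nat) : R :=
  sum_f_R0 (fun k => killed beta n kz t k) n.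

(* E_1 tau_zeta = sum_{t >= 0} P_1(tau_zeta > t)  (as a series) *)
Definition Etau (beta : R) (n kz : nat) : R := Series (surv beta n kz).

Definition texp (delta : R) (n : nat) (zeta : R) : R :=
  INR n / delta *
  exp (INR n / 2 * RInt (fun x => ln ((1 + gfun (1 + delta) x) / (1 - gfun (1 + delta) x))) 0 zeta).

(* Main.v *)
From Pilot Require Import Defs.
From Stdlib Require Import Reals Lra Lia Psatz.
From Coquelicot Require Import Coquelicot.
Import Pilot.Defs.
Open Scope R_scope.

Lemma exp_le x y : x <= y -> exp x <= exp y.
Proof. intros [H|H]; [left; apply exp_increasing; auto| subst; lra]. Qed.

Lemma tanh_alt y : tanh y = (exp (2*y) - 1) / (exp (2*y) + 1).
Proof.
  unfold tanh. replace (2*y) with (y + y) by ring. rewrite exp_plus.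
  assert (H := exp_pos y). rewrite exp_Ropp. field. split; nra.
Qed.

Lemma tanh_E y : let E := exp (2*y) in tanh y = (E - 1)/(E+1) /\ 0 < E.
Proof. split; [apply tanh_alt| apply exp_pos]. Qed.

Lemma tanh_lt1 y : -1 < tanh y < 1.
Proof.
  destruct (tanh_E y) as [-> HE]. set (E := exp (2*y)) in *.
  split; apply Rmult_lt_reg_r with (E+1); try lra; unfold Rdiv; rewrite Rmult_assoc, Rinv_l; lra.
Qed.

Lemma tanh_nonneg y : 0 <= y -> 0 <= tanh y.
Proof.
  intro Hy. destruct (tanh_E y) as [-> HE]. set (E := exp (2*y)) in *.
  assert (1 <= E). { unfold E. rewrite <- exp_0. apply exp_le. lra. }
  apply Rdiv_le_0_compat; lra.
Qed.

Lemma tanh_incr x y : x <= y -> tanh x <= tanh y.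
Proof.
  intro H. destruct (tanh_E x) as [-> HE]. destruct (tanh_E y) as [-> HF].
  assert (exp (2*x) <= exp (2*y)) by (apply exp_le; lra).
  set (E := exp (2*x)) in *. set (F := exp (2*y)) in *.
  apply Rmult_le_reg_r with ((E+1)*(F+1)). nra.
  replace ((E - 1) / (E + 1) * ((E + 1) * (F + 1))) with ((E-1)*(F+1)) by (field; lra).
  replace ((F - 1) / (F + 1) * ((E + 1) * (F + 1))) with ((F-1)*(E+1)) by (field; lra).
  nra.
Qed.

Lemma tanh_odd y : tanh (- y) = - tanh y.
Proof. unfold tanh. rewrite Ropp_involutive. field. 
  assert (H1:=exp_pos y). assert (H2 := exp_pos (-y)). lra. Qed.

Lemma tanh_add a b : tanh (a + b) = (tanh a + tanh b) / (1 + tanh a * tanh b).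
Proof.
  destruct (tanh_E a) as [-> HA]. destruct (tanh_E b) as [-> HB].
  destruct (tanh_E (a+b)) as [-> HAB].
  replace (2*(a+b)) with (2*a + 2*b) by ring. rewrite exp_plus.
  set (A := exp (2*a)) in *. set (B := exp (2*b)) in *.
  field. repeat split; try lra; nra.
Qed.

Lemma tanh_sum_le y e : 0 <= y -> tanh (y + e) + tanh (y - e) <= 2 * tanh y.
Proof.
  intro Hy. unfold Rminus. rewrite !tanh_add, tanh_odd.
  assert (Ht := tanh_nonneg y Hy). assert (Ht1 := tanh_lt1 y). assert (Hs := tanh_lt1 e).
  set (t := tanh y) in *. set (s := tanh e) in *.
  assert (0 < 1 + t*s) by nra. assert (0 < 1 + t * - s) by nra.
  replace ((t + s) / (1 + t * s) + (t + - s) / (1 + t * - s)) with (2*t*(1-s*s)/((1+t*s)*(1-t*s))) by (field; lra).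
  apply Rmult_le_reg_r with ((1+t*s)*(1-t*s)). nra.
  replace (2 * t * (1 - s * s) / ((1 + t * s) * (1 - t * s)) * ((1 + t * s) * (1 - t * s))) with (2*t*(1-s*s)) by (field; lra).
  assert (0 <= t*(s*s)*(1-t*t)) by (apply Rmult_le_pos; [apply Rmult_le_pos|]; nra). nra.
Qed.

Lemma one_minus_tanh y : 0 <= y -> exp (-2*y) <= 1 - tanh y.
Proof.
  intro Hy. destruct (tanh_E y) as [-> HE].
  replace (-2*y) with (-(2*y)) by ring. rewrite exp_Ropp.
  assert (1 <= exp (2*y)). { rewrite <- exp_0. apply exp_le. lra. }
  set (E := exp (2*y)) in *.
  replace (1 - (E-1)/(E+1)) with (2/(E+1)) by (field; lra).
  apply Rmult_le_reg_r with (E*(E+1)). nra.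
  replace (/ E * (E*(E+1))) with (E+1) by (field; lra).
  replace (2 / (E + 1) * (E * (E + 1))) with (2*E) by (field; lra). lra.
Qed.

Lemma tanh_ratio y : (1 + tanh y) / (1 - tanh y) = exp (2*y).
Proof.
  destruct (tanh_E y) as [-> HE]. set (E := exp (2*y)) in *. field. lra.
Qed.

Lemma mono0 (f df : R -> R) (b : R) : 0 <= b ->
  (forall x, 0 <= x <= b -> is_derive f x (df x)) ->
  (forall x, 0 <= x <= b -> 0 <= df x) -> f 0 <= f b.
Proof.
  intros Hb Hd Hp.
  destruct (MVT_gen f 0 b df) as [c [Hc Heq]].
  - intros x Hx. apply Hd. rewrite Rmin_left, Rmax_right in Hx by lra. lra.
  - intros x Hx. rewrite Rmin_left, Rmax_right in Hx by lra.
    apply continuity_pt_filterlim. apply (@ex_derive_continuous R_AbsRing R_NormedModule). eexists. apply Hd. lra.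
  - rewrite Rmin_left, Rmax_right in Hc by lra.
    assert (0 <= df c * (b - 0)) by (apply Rmult_le_pos; [apply Hp; lra| lra]). lra.
Qed.

Lemma ln_bound z : 0 <= z < 1 -> ln (1+z) - ln (1-z) <= 2*z + 2*z^3/(3*(1-z^2)).
Proof.
  intros Hz.
  set (F := fun z => 2*z + 2*z^3/(3*(1-z^2)) - (ln (1+z) - ln (1-z))).
  assert (F 0 <= F z).
  { apply (mono0 F (fun z => (4*z^4/3)/(1-z^2)^2)). lra.
    - intros x Hx. unfold F. auto_derive. repeat split; try lra; nra.
      field. repeat split; try lra; nra.
    - intros x Hx. apply Rdiv_le_0_compat. nra. apply pow_lt. nra. }
  unfold F in H. rewrite !Rplus_0_r, Rminus_0_r, ln_1 in H. 
  replace (2 * 0 + 2 * 0 ^ 3 / (3 * (1 - 0 ^ 2)) - (0 - 0)) with 0 in H by (simpl; field). lra.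
Qed.

Lemma J_nonneg z : 0 <= z < 1 -> 0 <= z/(1-z^2) - (ln (1+z) - ln (1-z))/2 - 2*z^3/3.
Proof.
  intros Hz.
  set (F := fun z => z/(1-z^2) - (ln (1+z) - ln (1-z))/2 - 2*z^3/3).
  assert (F 0 <= F z).
  { apply (mono0 F (fun z => 2*z^2*(1-(1-z^2)^2)/(1-z^2)^2)). lra.
    - intros x Hx. unfold F. auto_derive. repeat split; try lra; nra.
      field. repeat split; try lra; nra.
    - intros x Hx. apply Rdiv_le_0_compat. 2: apply pow_lt; nra.
      apply Rmult_le_pos. nra. assert (0 <= x^2 <= 1) by (split; nra). assert (0 <= (1-x^2)^2 <= 1) by (split; nra). lra. }
  unfold F in H. rewrite !Rplus_0_r, Rminus_0_r, ln_1 in H.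
  replace (0 / (1 - 0 ^ 2) - (0 - 0) / 2 - 2 * 0 ^ 3 / 3) with 0 in H by (simpl; field). unfold F; lra.
Qed.

Lemma I_bound z : 0 <= z < 1 -> z^4/6 <= -(1+z/2)*ln(1+z) - (1-z/2)*ln(1-z).
Proof.
  intros Hz.
  set (F := fun z => -(1+z/2)*ln(1+z) - (1-z/2)*ln(1-z) - z^4/6).
  assert (F 0 <= F z).
  { apply (mono0 F (fun z => z/(1-z^2) - (ln (1+z) - ln (1-z))/2 - 2*z^3/3)). lra.
    - intros x Hx. unfold F. auto_derive. repeat split; try lra; nra.
      unfold Rminus. field. split; nra.
    - intros x Hx. apply J_nonneg. lra. }
  unfold F in H. rewrite !Rplus_0_r, Rminus_0_r, ln_1 in H. unfold F. 
  replace (- (1 + 0 / 2) * 0 - (1 - 0 / 2) * 0 - 0 ^ 4 / 6) with 0 in H by (simpl; field). lra.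
Qed.

Lemma tanh_derive y : is_derive tanh y (1 - tanh y ^ 2).
Proof.
  unfold tanh. assert (H1 := exp_pos y). assert (H2 := exp_pos (-y)).
  auto_derive. lra. field. lra.
Qed.

Lemma tanh_le_id y : 0 <= y -> tanh y <= y.
Proof.
  intros Hy.
  assert (H : (fun z => z - tanh z) 0 <= (fun z => z - tanh z) y).
  { apply (mono0 (fun z => z - tanh z) (fun z => tanh z ^ 2)). lra.
    - intros x Hx. apply (is_derive_ext (fun z => z - tanh z)). reflexivity.
      replace (tanh x ^ 2) with (1 - (1 - tanh x ^ 2)) by ring.
      apply @is_derive_minus. apply @is_derive_id. apply tanh_derive.
    - intros. apply pow2_ge_0. }
  assert (tanh 0 = 0) by (rewrite tanh_alt, Rmult_0_r, exp_0; field). simpl in H; lra.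
Qed.

Lemma exp_ge_sq y : 0 <= y -> y^2/4 <= exp y.
Proof.
  intros Hy. replace y with (y/2 + y/2) at 2 by field. rewrite exp_plus.
  assert (H := exp_ineq1_le (y/2)). nra.
Qed.

Lemma exp_ge_4 y : 0 <= y -> y^4/256 <= exp y.
Proof.
  intros Hy. replace y with (y/4 + y/4 + (y/4 + y/4)) at 2 by field. rewrite !exp_plus.
  assert (H := exp_ineq1_le (y/4)). assert (0 <= y/4 <= exp (y/4)) by lra.
  set (e := exp (y/4)) in *.
  assert ((y/4)^2 <= e*e) by nra. assert ((y/4)^4 <= (e*e)*(e*e)).
  { replace ((y/4)^4) with ((y/4)^2*(y/4)^2) by ring. apply Rmult_le_compat; try nra. }
  nra.
Qed.

Lemma killed_gt beta n kz t k : (n < k)%nat -> killed beta n kz t k = 0.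
Proof.
  intros H. destruct t; simpl.
  - destruct (Nat.eqb_spec k n); [lia|reflexivity].
  - destruct (Nat.eqb k kz); [reflexivity|]. destruct (Nat.leb_spec k n); [lia|reflexivity].
Qed.

Lemma killed_kz beta n kz t : killed beta n kz t kz = 0.
Proof.
  destruct t; simpl.
  - rewrite Nat.eqb_refl. destruct (Nat.eqb kz n); reflexivity.
  - rewrite Nat.eqb_refl. reflexivity.
Qed.

Lemma killed_below beta n kz t k : (kz <= n)%nat -> (k < kz)%nat -> killed beta n kz t k = 0.
Proof.
  intros Hkz. revert k. induction t; intros k Hk; cbn [killed].
  - destruct (Nat.eqb_spec k n); [lia|reflexivity].
  - destruct (Nat.eqb_spec k kz); [reflexivity|].
    destruct (Nat.leb_spec k n); [|reflexivity].
    assert (E1 : match k with O => 0 | S k' => killed beta n kz t k' * pup beta n k' end = 0).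
    { destruct k; [reflexivity|]. rewrite IHt by lia. ring. }
    rewrite E1, IHt by lia.
    destruct (Nat.leb_spec (S k) n); [|ring].
    destruct (Nat.eq_dec (S k) kz) as [E|E].
    + rewrite E, killed_kz. ring.
    + rewrite IHt by lia. ring.
Qed.

Lemma st_range n k : (1 <= n)%nat -> (k <= n)%nat -> -1 <= st n k <= 1.
Proof.
  intros Hn Hk. unfold st. assert (0 < INR n) by (apply lt_0_INR; lia).
  assert (0 <= INR k <= INR n) by (split; [apply pos_INR| apply le_INR; lia]).
  split.
  - assert (0 <= 2 * INR k / INR n) by (apply Rdiv_le_0_compat; lra). lra.
  - assert (2 * INR k / INR n <= 2). { apply Rmult_le_reg_r with (INR n); auto.
      unfold Rdiv. rewrite Rmult_assoc, Rinv_l by lra. lra. } lra.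
Qed.

Lemma probs_ok beta n k : (1 <= n)%nat -> (k <= n)%nat ->
  0 <= pup beta n k /\ 0 <= pdown beta n k /\ 0 <= pstay beta n k.
Proof.
  intros Hn Hk. unfold pstay, pup, pdown. cbv zeta.
  destruct (st_range n k Hn Hk).
  assert (H1 := tanh_lt1 (beta * (st n k + 1 / INR n))).
  assert (H2 := tanh_lt1 (beta * (st n k - 1 / INR n))).
  set (x := st n k) in *.
  set (T1 := tanh (beta * (x + 1 / INR n))) in *.
  set (T2 := tanh (beta * (x - 1 / INR n))) in *.
  repeat split; nra.
Qed.

Lemma killed_nonneg beta n kz t k : (1 <= n)%nat -> 0 <= killed beta n kz t k.
Proof.
  intros Hn. revert k. induction t; intros k; cbn [killed].
  - destruct (Nat.eqb k n); [destruct (Nat.eqb k kz)|]; lra.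
  - destruct (Nat.eqb k kz); [lra|].
    destruct (Nat.leb_spec k n); [|lra].
    destruct (probs_ok beta n k Hn H) as [_ [_ Hs]].
    assert (0 <= match k with O => 0 | S k' => killed beta n kz t k' * pup beta n k' end).
    { destruct k; [lra|]. destruct (probs_ok beta n k Hn ltac:(lia)) as [Hp _].
      apply Rmult_le_pos; auto. }
    assert (0 <= killed beta n kz t k * pstay beta n k) by (apply Rmult_le_pos; auto).
    destruct (Nat.leb_spec (S k) n).
    + destruct (probs_ok beta n (S k) Hn H2) as [_ [Hq _]].
      assert (0 <= killed beta n kz t (S k) * pdown beta n (S k)) by (apply Rmult_le_pos; auto). lra.
    + lra.
Qed.

Lemma sum_swap (al be ga V : nat -> R) N :
  sum_f_R0 (fun k => V k * ((match k with O => 0 | S k' => al k' end) + be k + ga (S k))) N =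
  sum_f_R0 (fun k => al k * V (S k) + be k * V k + ga k * V (pred k)) N
  - al N * V (S N) + ga (S N) * V N - ga O * V O.
Proof.
  induction N; simpl.
  - ring.
  - rewrite IHN. simpl. ring.
Qed.

Lemma st_n n : (1 <= n)%nat -> st n n = 1.
Proof. intros. unfold st. assert (0 < INR n) by (apply lt_0_INR; lia). field_simplify; lra. Qed.

Lemma pup_n beta n : (1 <= n)%nat -> pup beta n n = 0.
Proof. intros. unfold pup. cbv zeta. rewrite st_n by auto. lra. Qed.

Lemma killed_succ beta n kz t k : (k <= n)%nat -> k <> kz ->
  killed beta n kz (S t) k =
  (match k with O => 0 | S k' => killed beta n kz t k' * pup beta n k' end)
  + killed beta n kz t k * pstay beta n k + killed beta n kz t (S k) * pdown beta n (S k).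
Proof.
  intros Hk Hne. cbn [killed].
  destruct (Nat.eqb_spec k kz); [lia|]. destruct (Nat.leb_spec k n); [|lia].
  destruct (Nat.leb_spec (S k) n); [reflexivity|].
  rewrite (killed_gt beta n kz t (S k)) by lia. ring.
Qed.

Definition Mt beta n kz (V : nat -> R) t := sum_f_R0 (fun k => killed beta n kz t k * V k) n.

Lemma bracket_nonneg beta n kz t k : (1 <= n)%nat -> (k <= n)%nat ->
  0 <= (match k with O => 0 | S k' => killed beta n kz t k' * pup beta n k' end)
  + killed beta n kz t k * pstay beta n k + killed beta n kz t (S k) * pdown beta n (S k).
Proof.
  intros Hn Hk.
  assert (0 <= match k with O => 0 | S k' => killed beta n kz t k' * pup beta n k' end).
  { destruct k; [lra|]. destruct (probs_ok beta n k Hn ltac:(lia)) as [Hp _].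
    apply Rmult_le_pos; auto. apply killed_nonneg; auto. }
  destruct (probs_ok beta n k Hn Hk) as [_ [_ Hs]].
  assert (0 <= killed beta n kz t k * pstay beta n k) by (apply Rmult_le_pos; auto; apply killed_nonneg; auto).
  destruct (Nat.leb_spec (S k) n) as [HS|HS].
  + destruct (probs_ok beta n (S k) Hn HS) as [_ [Hq _]].
    assert (0 <= killed beta n kz t (S k) * pdown beta n (S k)) by (apply Rmult_le_pos; auto; apply killed_nonneg; auto). lra.
  + rewrite (killed_gt beta n kz t (S k)) by lia. lra.
Qed.

Lemma step beta n kz (V : nat -> R) t : (1 <= n)%nat -> (kz <= n)%nat ->
  (forall k, (kz <= k <= n)%nat -> 0 <= V k) ->
  (forall k, (kz < k <= n)%nat -> pup beta n k * V (S k) + pstay beta n k * V k + pdown beta n k * V (pred k) <= V k - 1) ->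
  Mt beta n kz V (S t) + surv beta n kz t <= Mt beta n kz V t.
Proof.
  intros Hn Hkz HV Hgen.
  set (a := killed beta n kz t).
  set (al := fun j => a j * pup beta n j).
  set (be := fun j => a j * pstay beta n j).
  set (ga := fun j => a j * pdown beta n j).
  assert (Hle : Mt beta n kz V (S t) <= sum_f_R0 (fun k => V k * ((match k with O => 0 | S k' => al k' end) + be k + ga (S k))) n).
  { unfold Mt. apply sum_Rle. intros k Hk.
    assert (Hb := bracket_nonneg beta n kz t k Hn Hk).
    replace ((match k with O => 0 | S k' => al k' end) + be k + ga (S k)) with
      ((match k with O => 0 | S k' => killed beta n kz t k' * pup beta n k' end)
  + killed beta n kz t k * pstay beta n k + killed beta n kz t (S k) * pdown beta n (S k))
      by (destruct k; reflexivity).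
    destruct (Nat.eq_dec k kz) as [E|E].
    - subst k. rewrite (killed_kz beta n kz (S t)). rewrite Rmult_0_l.
      apply Rmult_le_pos; [apply HV; lia| exact Hb].
    - rewrite (killed_succ beta n kz t k Hk E). lra. }
  rewrite sum_swap in Hle.
  assert (E1 : al n = 0) by (unfold al; rewrite pup_n by auto; ring).
  assert (E2 : ga (S n) = 0) by (unfold ga, a; rewrite killed_gt by lia; ring).
  assert (E3 : ga O = 0).
  { unfold ga, a. destruct (Nat.eq_dec kz O) as [E|E].
    - rewrite <- E, killed_kz. ring.
    - rewrite killed_below by lia. ring. }
  rewrite E1, E2, E3 in Hle.
  assert (Hs : sum_f_R0 (fun k => al k * V (S k) + be k * V k + ga k * V (pred k)) n
             <= sum_f_R0 (fun k => a k * V k - a k) n).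
  { apply sum_Rle. intros k Hk. unfold al, be, ga.
    destruct (Nat.le_gt_cases k kz) as [Hk2|Hk2].
    - destruct (Nat.eq_dec k kz) as [E|E].
      + subst k. unfold a. rewrite killed_kz. lra.
      + unfold a. rewrite killed_below by lia. lra.
    - assert (Ha : 0 <= a k) by (apply killed_nonneg; auto).
      specialize (Hgen k ltac:(lia)).
      replace (a k * pup beta n k * V (S k) + a k * pstay beta n k * V k + a k * pdown beta n k * V (pred k))
        with (a k * (pup beta n k * V (S k) + pstay beta n k * V k + pdown beta n k * V (pred k))) by ring.
      replace (a k * V k - a k) with (a k * (V k - 1)) by ring.
      apply Rmult_le_compat_l; auto. }
  rewrite minus_sum in Hs. unfold Mt in *; unfold surv. fold a. change (fun k => a k) with a. lra.
Qed.

Lemma sum_single n c : sum_f_R0 (fun k => if Nat.eqb k n then c else 0) n = c.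
Proof.
  destruct n.
  - simpl. reflexivity.
  - simpl. rewrite Nat.eqb_refl.
    assert (sum_f_R0 (fun k => if Nat.eqb k (S n) then c else 0) n = 0).
    { apply sum_eq_R0. intros k Hk. destruct (Nat.eqb_spec k (S n)); [lia|reflexivity]. }
    rewrite H. ring.
Qed.

Lemma partial_bound beta n kz (V : nat -> R) : (1 <= n)%nat -> (kz <= n)%nat ->
  (forall k, (kz <= k <= n)%nat -> 0 <= V k) ->
  (forall k, (kz < k <= n)%nat -> pup beta n k * V (S k) + pstay beta n k * V k + pdown beta n k * V (pred k) <= V k - 1) ->
  forall T, sum_f_R0 (surv beta n kz) T <= V n.
Proof.
  intros Hn Hkz HV Hgen.
  assert (Hpos : forall t, 0 <= Mt beta n kz V t).
  { intros t. unfold Mt. apply cond_pos_sum. intros k.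
    destruct (Nat.le_gt_cases k n) as [H1|H1].
    - destruct (Nat.le_gt_cases kz k) as [H2|H2].
      + apply Rmult_le_pos. apply killed_nonneg; auto. apply HV; lia.
      + rewrite killed_below by lia. lra.
    - rewrite killed_gt by lia. lra. }
  assert (H0 : Mt beta n kz V 0 <= V n).
  { unfold Mt. cbn [killed].
    destruct (Nat.eq_dec n kz) as [E|E].
    - rewrite sum_eq_R0. apply HV; lia.
      intros k Hk. destruct (Nat.eqb_spec k n); [|ring]. destruct (Nat.eqb_spec k kz); [ring|lia].
    - rewrite (sum_eq _ (fun k => if Nat.eqb k n then V n else 0)). rewrite sum_single; lra.
      intros k Hk. destruct (Nat.eqb_spec k n); [|ring]. destruct (Nat.eqb_spec k kz); [lia|]. subst; ring. }
  assert (Hind : forall T, Mt beta n kz V (S T) + sum_f_R0 (surv beta n kz) T <= Mt beta n kz V 0).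
  { induction T.
    - simpl. apply step; auto.
    - simpl. assert (H := step beta n kz V (S T) Hn Hkz HV Hgen). lra. }
  intros T. specialize (Hind T). specialize (Hpos (S T)). lra.
Qed.

Lemma surv_nonneg beta n kz t : (1 <= n)%nat -> 0 <= surv beta n kz t.
Proof. intros. unfold surv. apply cond_pos_sum. intros. apply killed_nonneg; auto. Qed.

Lemma series_bound beta n kz (V : nat -> R) : (1 <= n)%nat -> (kz <= n)%nat ->
  (forall k, (kz <= k <= n)%nat -> 0 <= V k) ->
  (forall k, (kz < k <= n)%nat -> pup beta n k * V (S k) + pstay beta n k * V k + pdown beta n k * V (pred k) <= V k - 1) ->
  ex_series (surv beta n kz) /\ 0 <= Etau beta n kz <= V n.
Proof.
  intros Hn Hkz HV Hgen.
  assert (Hp := partial_bound beta n kz V Hn Hkz HV Hgen).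
  assert (Hinc : forall N, sum_n (surv beta n kz) N <= sum_n (surv beta n kz) (S N)).
  { intros N. rewrite !sum_n_Reals. simpl. assert (H := surv_nonneg beta n kz (S N) Hn). lra. }
  assert (Hb : forall N, sum_n (surv beta n kz) N <= V n).
  { intros N. rewrite sum_n_Reals. apply Hp. }
  destruct (ex_finite_lim_seq_incr _ (V n) Hinc Hb) as [l Hl].
  assert (Hs : is_series (surv beta n kz) l) by exact Hl.
  split. exists l; exact Hs.
  unfold Etau. rewrite (is_series_unique _ _ Hs). split.
  - assert (H0 : Rbar_le (Finite 0) (Finite l)).
    { apply (is_lim_seq_le (fun _ => 0) (sum_n (surv beta n kz))). intros N. rewrite sum_n_Reals.
      apply cond_pos_sum. intros; apply surv_nonneg; auto. apply is_lim_seq_const. exact Hl. }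
    exact H0.
  - assert (H0 : Rbar_le (Finite l) (Finite (V n))).
    { apply (is_lim_seq_le (sum_n (surv beta n kz)) (fun _ => V n)). exact Hb. exact Hl. apply is_lim_seq_const. }
    exact H0.
Qed.

Lemma ln_le_mono x y : 0 < x -> x <= y -> ln x <= ln y.
Proof. intros Hx [H|H]; [left; apply ln_increasing; auto| subst; lra]. Qed.

Lemma L1 y : -1 < y -> ln (1+y) <= y.
Proof. intros H. rewrite <- (ln_exp y) at 2. apply ln_le_mono. lra. apply exp_ineq1_le. Qed.

Lemma L2 y : 0 <= y -> y - y^2/2 <= ln (1+y).
Proof.
  intros Hy.
  assert (H : (fun z => ln (1+z) - z + z^2/2) 0 <= (fun z => ln (1+z) - z + z^2/2) y).
  { apply (mono0 (fun z => ln (1+z) - z + z^2/2) (fun z => z^2/(1+z))). lra.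
    - intros x Hx. auto_derive. lra. field. lra.
    - intros x Hx. apply Rdiv_le_0_compat. nra. lra. }
  simpl in H. rewrite Rplus_0_r, ln_1 in H. lra.
Qed.

Lemma L3 y : 0 <= y < 1 -> ln (1-y) <= -y - y^2/2.
Proof.
  intros Hy.
  assert (H : (fun z => -z - z^2/2 - ln (1-z)) 0 <= (fun z => -z - z^2/2 - ln (1-z)) y).
  { apply (mono0 (fun z => -z - z^2/2 - ln (1-z)) (fun z => z^2/(1-z))). lra.
    - intros x Hx. auto_derive. lra. field. lra.
    - intros x Hx. apply Rdiv_le_0_compat. nra. lra. }
  simpl in H. rewrite Rminus_0_r, ln_1 in H. lra.
Qed.

Lemma L4 y : 0 <= y <= 1/2 -> -y - y^2 <= ln (1-y).
Proof.
  intros Hy.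
  assert (H : (fun z => ln (1-z) + z + z^2) 0 <= (fun z => ln (1-z) + z + z^2) y).
  { apply (mono0 (fun z => ln (1-z) + z + z^2) (fun z => z*(1-2*z)/(1-z))). lra.
    - intros x Hx. auto_derive. lra. field. lra.
    - intros x Hx. apply Rdiv_le_0_compat. nra. lra. }
  simpl in H. rewrite Rminus_0_r, ln_1 in H. lra.
Qed.

Lemma gen_abstract p q h c u m a q0 :
  0 < h -> 0 < m -> 0 < a -> h <= c -> h/2 <= u -> 3*h/2 <= m ->
  0 <= p <= q -> p + q <= 1 -> a/4*u*(u+m) <= q - p -> h <= a*m*m^2/36 ->
  (u < c/2 -> c <= 2*m/3 /\ q0 <= q /\ c^2 = q0*h/(2*(a*m)) /\ 0 < q0) ->
  p * (ln (1 + h/(u+c)) - ln (1 + h/(u+c+m))) + q * (ln (1 - h/(u+c)) - ln (1 - h/(u+c+m)))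
   <= - (a*m)*h/72.
Proof.
  intros Hh Hm Ha Hc Hu Hm2 Hpq Hpq1 Hd H3 Hcase.
  set (w := u + c). set (W := u + c + m).
  assert (Hw : 3*h/2 <= w) by (unfold w; lra).
  assert (HW : w + m = W) by (unfold w, W; ring).
  set (y1 := h/w). set (y2 := h/W).
  assert (Hy1 : 0 < y1 < 1). { unfold y1. split. apply Rdiv_lt_0_compat; lra.
     apply Rmult_lt_reg_r with w. lra. unfold Rdiv. rewrite Rmult_assoc, Rinv_l; lra. }
  assert (Hy2 : 0 < y2 <= 1/2). { unfold y2. split. apply Rdiv_lt_0_compat; lra.
     apply Rmult_le_reg_r with W. lra. unfold Rdiv. rewrite Rmult_assoc, Rinv_l; lra. }
  assert (Hy12 : y2 <= y1). { unfold y1, y2. apply Rmult_le_compat_l. lra. apply Rinv_le_contravar; lra. }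
  assert (Hdiff : y1 - y2 = h*m/(w*W)). { unfold y1, y2. rewrite <- HW. field. lra. }
  assert (E1 := L1 y1 ltac:(lra)). assert (E2 := L2 y2 ltac:(lra)).
  assert (E3 := L3 y1 ltac:(lra)). assert (E4 := L4 y2 ltac:(lra)).
  assert (Hbound : p * (ln (1 + y1) - ln (1 + y2)) + q * (ln (1 - y1) - ln (1 - y2))
     <= - (q-p)*(y1-y2) + p*y2^2/2 + q*y2^2 - q*y1^2/2).
  { assert (p * (ln (1 + y1) - ln (1 + y2)) <= p * (y1 - (y2 - y2^2/2))) by (apply Rmult_le_compat_l; lra).
    assert (q * (ln (1 - y1) - ln (1 - y2)) <= q * ((-y1 - y1^2/2) - (-y2 - y2^2))) by (apply Rmult_le_compat_l; lra).
    lra. }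
  fold w W y1 y2. eapply Rle_trans. exact Hbound.
  destruct (Rlt_or_le u (c/2)) as [Hlt|Hge].
  - destruct (Hcase Hlt) as [Hc2 [Hq0 [Hcc Hq0p]]].
    assert (HW2 : 2*w <= W) by (unfold w, W; lra).
    assert (Hy2' : y2 <= y1/2). { unfold y1, y2. unfold Rdiv. 
       apply Rmult_le_reg_r with (W*w). nra. 
       replace (h * / W * (W * w)) with (h*w) by (field; lra).
       replace (h * / w * / 2 * (W * w)) with (h*W/2) by (field; lra). nra. }
    assert (Hfirst : 0 <= (q-p)*(y1-y2)) by (apply Rmult_le_pos; lra).
    assert (Hsq : y2^2 <= y1^2/4) by nra.
    assert (Hy1b : 8*(a*m)*h/(9*q0) <= y1^2).
    { assert (w <= 3*c/2) by (unfold w; lra).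
      assert (2*h/(3*c) <= y1). { unfold y1. unfold Rdiv. apply Rmult_le_reg_r with (3*c*w). nra.
        replace (2 * h * / (3 * c) * (3 * c * w)) with (2*h*w) by (field; lra).
        replace (h * / w * (3 * c * w)) with (3*h*c) by (field; lra). nra. }
      assert (4*h^2/(9*c^2) <= y1^2).
      { replace (4*h^2/(9*c^2)) with ((2*h/(3*c))^2) by (field; lra).
        assert (0 <= 2*h/(3*c)) by (apply Rdiv_le_0_compat; lra). nra. }
      replace (8*(a*m)*h/(9*q0)) with (4*h^2/(9*c^2)). lra.
      rewrite Hcc. field. repeat split; nra. }
    assert (q0 * (8*(a*m)*h/(9*q0)) <= q * y1^2).
    { apply Rmult_le_compat; try lra. apply Rdiv_le_0_compat; try nra. }
    replace (q0 * (8*(a*m)*h/(9*q0))) with (8*(a*m)*h/9) in H by (field; lra).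
    assert (0 < a*m*h) by (apply Rmult_lt_0_compat; [apply Rmult_lt_0_compat|]; lra).
    nra.
  - assert (Hw3 : w <= 3*u) by (unfold w; lra).
    assert (HW3 : W <= 3*(u+m)) by (unfold W; lra).
    assert (Hfirst : (a*m)*h/36 <= (q-p)*(y1-y2)).
    { rewrite Hdiff. apply Rle_trans with (a/4*u*(u+m) * (h*m/(w*W))).
      - assert (0 < w*W) by nra.
        assert (w*W <= 9*(u*(u+m))) by nra.
        assert (R1 : 1/9 <= u*(u+m)/(w*W)).
        { assert (Eq : u*(u+m)/(w*W) - 1/9 = (9*(u*(u+m)) - w*W)/(9*(w*W))) by (field; lra).
          assert (0 <= (9*(u*(u+m)) - w*W)/(9*(w*W))) by (apply Rdiv_le_0_compat; lra). lra. }
        replace (a/4*u*(u+m) * (h*m/(w*W))) with ((a*h*m/4) * (u*(u+m)/(w*W))) by (field; lra).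
        assert (0 <= a*h*m/4) by (apply Rdiv_le_0_compat; [apply Rmult_le_pos;[apply Rmult_le_pos|]|]; lra).
        assert (a*h*m/4 * (1/9) <= a*h*m/4 * (u*(u+m)/(w*W))) by (apply Rmult_le_compat_l; lra).
        lra.
      - apply Rmult_le_compat_r. apply Rdiv_le_0_compat; nra. lra. }
    assert (Hsec : p*y2^2/2 + q*y2^2 - q*y1^2/2 <= y2^2/2).
    { assert (q*y2^2 <= q*y1^2) by (apply Rmult_le_compat_l; nra). nra. }
    assert (Hy2m : y2^2/2 <= (a*m)*h/72).
    { assert (y2 <= h/m). { unfold y2. apply Rmult_le_compat_l. lra. apply Rinv_le_contravar; lra. }
      assert (y2^2 <= (h/m)^2) by nra.
      assert ((h/m)^2 <= (a*m)*h/36).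
      { replace ((h/m)^2) with (h*(h/m^2)) by (field; lra).
        replace ((a*m)*h/36) with (h*((a*m*m^2/36)/m^2)) by (field; lra).
        apply Rmult_le_compat_l. lra. unfold Rdiv. apply Rmult_le_compat_r. 
        apply Rlt_le, Rinv_0_lt_compat. nra. lra. }
      lra. }
    lra.
Qed.

Lemma root_tanh beta z : 0 < z < 1 -> gfun beta z = 0 -> tanh (beta * z) = z.
Proof.
  intros Hz Hg. unfold gfun in Hg. assert (H := tanh_lt1 (beta*z)).
  assert (0 < 1 - z * tanh (beta*z)) by nra.
  unfold Rdiv in Hg. apply Rmult_integral in Hg. destruct Hg as [Hg|Hg]. lra.
  exfalso. apply (Rinv_neq_0_compat _ (Rgt_not_eq _ _ H0)). exact Hg.
Qed.

Lemma exp2a a z : 0 < z < 1 -> tanh a = z -> exp (2*a) = (1+z)/(1-z).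
Proof.
  intros Hz Ht. rewrite tanh_alt in Ht. assert (H := exp_pos (2*a)).
  set (E := exp (2*a)) in *.
  assert (H0 : E - 1 = z*(E+1)) by (rewrite <- Ht; field; lra).
  assert (H1 : E*(1-z) = 1+z) by lra.
  apply Rmult_eq_reg_r with (1-z). rewrite H1. field. lra. lra.
Qed.

Lemma twoa a z : 0 < z < 1 -> tanh a = z -> 2*a = ln (1+z) - ln (1-z).
Proof.
  intros Hz Ht. rewrite <- (ln_exp (2*a)). rewrite (exp2a a z Hz Ht).
  unfold Rdiv. rewrite ln_mult, ln_Rinv by (try apply Rinv_0_lt_compat; lra). ring.
Qed.

Lemma beta_bound beta z : 0 < z < 1 -> tanh (beta*z) = z ->
  beta * z <= z + z^3/(3*(1-z^2)).
Proof.
  intros Hz Ht. assert (H := twoa (beta*z) z Hz Ht). assert (H2 := ln_bound z ltac:(lra)). lra.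
Qed.

Lemma kappa_bounds beta z : 0 < z < 1 -> 1 <= beta -> tanh (beta*z) = z ->
  2*z^2/3 <= 1 - beta*(1-z^2) <= z^2 /\ beta - 1 <= z^2/(3*(1-z^2)).
Proof.
  intros Hz Hb Ht. assert (H := beta_bound beta z Hz Ht).
  assert (0 < 1 - z^2) by nra.
  assert (Hb2 : beta <= 1 + z^2/(3*(1-z^2))).
  { apply Rmult_le_reg_r with z. lra. 
    replace ((1 + z^2/(3*(1-z^2)))*z) with (z + z^3/(3*(1-z^2))) by (field; lra). lra. }
  split; [split|].
  - assert (beta*(1-z^2) <= (1 + z^2/(3*(1-z^2)))*(1-z^2)) by (apply Rmult_le_compat_r; lra).
    replace ((1 + z^2/(3*(1-z^2)))*(1-z^2)) with (1 - 2*z^2/3) in H1 by (field; lra). lra.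
  - assert ((1-z^2) <= beta*(1-z^2)) by nra. lra.
  - lra.
Qed.

Lemma st_S n k : (1 <= n)%nat -> st n (S k) = st n k + 2 / INR n.
Proof. intros. unfold st. rewrite S_INR. field. apply not_0_INR. lia. Qed.

Lemma nearest_above n kz z k : (1 <= n)%nat ->
  (forall j, (j <= n)%nat -> Rabs (st n kz - z) <= Rabs (st n j - z)) ->
  (kz < k <= n)%nat -> 1 / INR n <= st n k - z.
Proof.
  intros Hn Hnear Hk.
  assert (Hd : st n kz + 2/INR n <= st n k).
  { assert (INR (S kz) <= INR k) by (apply le_INR; lia).
    assert (0 < INR n) by (apply lt_0_INR; lia).
    unfold st. rewrite S_INR in H.
    assert (2 * INR kz / INR n + 2/INR n <= 2 * INR k / INR n).
    { unfold Rdiv. rewrite <- Rmult_plus_distr_r. apply Rmult_le_compat_r. 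
      apply Rlt_le, Rinv_0_lt_compat; lra. lra. } lra. }
  assert (Hj := Hnear k ltac:(lia)).
  assert (0 < 1/INR n) by (apply Rdiv_lt_0_compat; [lra| apply lt_0_INR; lia]).
  destruct (Rle_or_lt z (st n k)) as [H1|H1].
  - rewrite (Rabs_right (st n k - z)) in Hj by lra.
    destruct (Rle_or_lt z (st n kz)) as [H2|H2].
    + rewrite Rabs_right in Hj by lra. lra.
    + rewrite Rabs_left in Hj by lra. lra.
  - exfalso. rewrite (Rabs_left (st n k - z)) in Hj by lra.
    destruct (Rle_or_lt z (st n kz)) as [H2|H2].
    + lra.
    + rewrite Rabs_left in Hj by lra. lra.
Qed.

Lemma nearest_kz n kz z : (1 <= n)%nat -> (kz < n)%nat ->
  (forall j, (j <= n)%nat -> Rabs (st n kz - z) <= Rabs (st n j - z)) ->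
  - (1 / INR n) <= st n kz - z.
Proof.
  intros Hn Hkz Hnear.
  assert (Hj := Hnear (S kz) ltac:(lia)). rewrite st_S in Hj by auto.
  assert (0 < 1/INR n) by (apply Rdiv_lt_0_compat; [lra| apply lt_0_INR; lia]).
  replace (2/INR n) with (2*(1/INR n)) in Hj by (field; apply not_0_INR; lia).
  destruct (Rle_or_lt z (st n kz)) as [H2|H2]. lra.
  rewrite (Rabs_left (st n kz - z)) in Hj by lra.
  destruct (Rle_or_lt z (st n kz + 2 * (1 / INR n))) as [H1|H1].
  - rewrite Rabs_right in Hj by lra. lra.
  - rewrite Rabs_left in Hj by lra. lra.
Qed.

Lemma drift beta n k : (1 <= n)%nat -> (k <= n)%nat -> 0 < beta -> 1 / INR n <= st n k ->
  (st n k - tanh (beta * st n k)) / 2 <= pdown beta n k - pup beta n k.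
Proof.
  intros Hn Hk Hb Hx. unfold pdown, pup. cbv zeta.
  destruct (st_range n k Hn Hk).
  set (x := st n k) in *.
  assert (E1 : beta * (x + 1/INR n) = beta*x + beta/INR n) by (field; apply not_0_INR; lia).
  assert (E2 : beta * (x - 1/INR n) = beta*x - beta/INR n) by (field; apply not_0_INR; lia).
  rewrite E1, E2.
  assert (0 < 1/INR n) by (apply Rdiv_lt_0_compat; [lra| apply lt_0_INR; lia]).
  assert (Hs := tanh_sum_le (beta*x) (beta/INR n) ltac:(apply Rmult_le_pos; lra)).
  assert (0 < beta / INR n) by (apply Rdiv_lt_0_compat; [lra| apply lt_0_INR; lia]).
  assert (Hm := tanh_incr (beta*x - beta/INR n) (beta*x + beta/INR n) ltac:(lra)).
  set (Tp := tanh (beta*x + beta/INR n)) in *. set (Tm := tanh (beta*x - beta/INR n)) in *.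
  set (T := tanh (beta*x)) in *.
  assert (0 <= x * (Tp - Tm)) by (apply Rmult_le_pos; lra).
  assert (0 < 1/INR n) by (apply Rdiv_lt_0_compat; [lra| apply lt_0_INR; lia]).
  nra.
Qed.

Lemma f_lower beta z u : 0 < z < 1 -> 1 <= beta -> tanh (beta*z) = z -> 0 <= u -> z + u <= 1 ->
  0 <= 1 - beta*(1-z^2) ->
  u * ((1 - beta*(1-z^2)) + beta*z*u) / 2 <= (z+u) - tanh (beta*(z+u)).
Proof.
  intros Hz Hb Ht Hu Hx Hk.
  replace (beta*(z+u)) with (beta*z + beta*u) by ring. rewrite tanh_add, Ht.
  assert (Hs0 := tanh_nonneg (beta*u) ltac:(nra)). assert (Hs1 := tanh_le_id (beta*u) ltac:(nra)).
  assert (Hs2 := tanh_lt1 (beta*u)).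
  set (s := tanh (beta*u)) in *.
  assert (Hden : 0 < 1 + z*s) by nra.
  replace (z + u - (z + s)/(1 + z*s)) with ((u - s*(1 - z^2 - z*u))/(1+z*s)) by (field; lra).
  assert (Hnum : u * ((1 - beta*(1-z^2)) + beta*z*u) <= u - s*(1 - z^2 - z*u)).
  { assert (0 <= 1 - z^2 - z*u) by nra. 
    assert (s*(1 - z^2 - z*u) <= beta*u*(1 - z^2 - z*u)) by (apply Rmult_le_compat_r; lra). nra. }
  destruct (Rle_or_lt 0 (u * ((1 - beta*(1-z^2)) + beta*z*u))) as [Hp|Hp].
  - apply Rle_trans with ((u - s * (1 - z ^ 2 - z * u))/2).
    lra. apply Rmult_le_reg_r with (2*(1+z*s)). nra.
    unfold Rdiv. replace ((u - s * (1 - z ^ 2 - z * u)) * / (1 + z * s) * (2 * (1 + z * s))) 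
      with (2*(u - s * (1 - z ^ 2 - z * u))) by (field; lra).
    replace ((u - s * (1 - z ^ 2 - z * u)) * / 2 * (2 * (1 + z * s))) with ((u - s * (1 - z ^ 2 - z * u))*(1+z*s)) by field.
    assert (0 <= u - s * (1 - z ^ 2 - z * u)) by lra. assert (z*s <= 1) by nra. nra.
  - exfalso. assert (0 <= beta*z*u) by (apply Rmult_le_pos; nra). nra.
Qed.

Lemma model_drift delta n kz z k : (1 <= n)%nat -> 0 < delta -> 0 < z < 1 ->
  tanh ((1+delta)*z) = z ->
  (forall j, (j <= n)%nat -> Rabs (st n kz - z) <= Rabs (st n j - z)) ->
  (kz < k <= n)%nat ->
  let u := st n k - z in let kap := 1 - (1+delta)*(1-z^2) in
  1 / INR n <= u /\ 0 <= pup (1+delta) n k /\ pup (1+delta) n k + pdown (1+delta) n k <= 1 /\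
  u * (kap + (1+delta)*z*u) / 4 <= pdown (1+delta) n k - pup (1+delta) n k /\ 0 <= kap.
Proof.
  intros Hn Hd Hz Ht Hnear Hk u kap.
  assert (Hu : 1 / INR n <= u) by (apply (nearest_above n kz z k); auto).
  assert (Hk2 : 2*z^2/3 <= kap) by (apply kappa_bounds; auto; lra).
  assert (0 <= kap) by nra.
  destruct (probs_ok (1+delta) n k Hn ltac:(lia)) as [Hp [Hq Hs]].
  unfold pstay in Hs.
  assert (0 < 1/INR n) by (apply Rdiv_lt_0_compat; [lra| apply lt_0_INR; lia]).
  destruct (st_range n k Hn ltac:(lia)).
  assert (Hdr := drift (1+delta) n k Hn ltac:(lia) ltac:(lra) ltac:(unfold u in Hu; lra)).
  assert (Hf := f_lower (1+delta) z u Hz ltac:(lra) Ht ltac:(lra) ltac:(unfold u; lra) ltac:(exact H)).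
  replace (z + u) with (st n k) in Hf by (unfold u; ring). fold kap in Hf.
  repeat split; try lra.
Qed.

Lemma pdown_lower beta n k : (1 <= n)%nat -> (k <= n)%nat -> 0 < beta -> 1 / INR n <= st n k ->
  exp (-2*(beta * st n k)) / 4 <= pdown beta n k.
Proof.
  intros Hn Hk Hb Hx. unfold pdown. cbv zeta. destruct (st_range n k Hn Hk) as [Hr1 Hr2].
  assert (0 < 1/INR n) by (apply Rdiv_lt_0_compat; [lra| apply lt_0_INR; lia]).
  assert (H1 := one_minus_tanh (beta * st n k) ltac:(apply Rmult_le_pos; lra)).
  assert (H2 := tanh_incr (beta * (st n k - 1 / INR n)) (beta * st n k) ltac:(nra)).
  assert (H3 := exp_pos (-2*(beta * st n k))).
  assert (H4 := tanh_lt1 (beta * (st n k - 1 / INR n))).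
  nra.
Qed.

Lemma ex_series_case delta n kz z : (1 <= n)%nat -> 0 < delta -> 0 < z < 1 ->
  tanh ((1+delta)*z) = z -> (kz <= n)%nat ->
  (forall j, (j <= n)%nat -> Rabs (st n kz - z) <= Rabs (st n j - z)) ->
  ex_series (surv (1+delta) n kz) /\ 0 <= Etau (1+delta) n kz.
Proof.
  intros Hn Hd Hz Ht Hkz Hnear.
  set (kap := 1 - (1+delta)*(1-z^2)).
  assert (Hk2 : 2*z^2/3 <= kap) by (apply kappa_bounds; auto; lra).
  assert (Hkp : 0 < kap) by nra.
  set (A := 4 * INR n / kap).
  assert (HnR : 0 < INR n) by (apply lt_0_INR; lia).
  assert (HA : 0 < A) by (unfold A; apply Rdiv_lt_0_compat; lra).
  cut (ex_series (surv (1+delta) n kz) /\ 0 <= Etau (1+delta) n kz <= (fun k => A * (INR k - INR kz)) n).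
  { intros [H1 [H2 _]]; split; auto. }
  apply (series_bound (1+delta) n kz (fun k => A * (INR k - INR kz)) Hn Hkz).
  - intros k Hk. apply Rmult_le_pos. lra. assert (INR kz <= INR k) by (apply le_INR; lia). lra.
  - intros k Hk.
    destruct (model_drift delta n kz z k Hn Hd Hz Ht Hnear Hk) as [Hu [Hp [Hpq [Hdr _]]]].
    cbv zeta in *. fold kap in Hdr.
    set (u := st n k - z) in *.
    assert (HSk : INR (S k) = INR k + 1) by apply S_INR.
    assert (Hpk : INR (pred k) = INR k - 1).
    { destruct k. lia. simpl pred. rewrite S_INR. ring. }
    rewrite HSk, Hpk. unfold pstay.
    assert (0 < 1/INR n) by (apply Rdiv_lt_0_compat; lra).
    assert (Hlow : kap / INR n <= u * (kap + (1+delta)*z*u)).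
    { assert (0 <= (1+delta)*z*u) by (apply Rmult_le_pos; [apply Rmult_le_pos|]; lra).
      assert (kap * (1/INR n) <= kap * u) by (apply Rmult_le_compat_l; lra).
      assert (0 <= u*((1+delta)*z*u)) by (apply Rmult_le_pos; lra).
      unfold Rdiv in *. nra. }
    assert (A * (kap / INR n) / 4 = 1) by (unfold A; field; lra).
    assert (A * (u * (kap + (1+delta)*z*u)) / 4 <= A * (pdown (1+delta) n k - pup (1+delta) n k)).
    { unfold Rdiv. rewrite Rmult_assoc. apply Rmult_le_compat_l; lra. }
    assert (A * (kap / INR n) <= A * (u * (kap + (1+delta)*z*u))) by (apply Rmult_le_compat_l; lra).
    nra.
Qed.

Lemma ln_split w h : 0 < w -> 0 < w + h -> ln (w+h) - ln w = ln (1 + h/w).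
Proof.
  intros Hw Hwh. replace (w+h) with (w*(1+h/w)) by (field; lra).
  rewrite ln_mult. ring. lra.
  assert (0 < (w+h)/w) by (apply Rdiv_lt_0_compat; lra).
  replace (1 + h/w) with ((w+h)/w) by (field; lra). lra.
Qed.

Definition phi m y := ln y - ln (y + m).

Lemma phi_mono m y1 y2 : 0 < m -> 0 < y1 -> y1 <= y2 -> phi m y1 <= phi m y2.
Proof.
  intros Hm H1 H2. unfold phi.
  assert (E1 : ln y1 - ln (y1+m) = ln (y1/(y1+m))).
  { unfold Rdiv. rewrite ln_mult, ln_Rinv; try apply Rinv_0_lt_compat; lra. }
  assert (E2 : ln y2 - ln (y2+m) = ln (y2/(y2+m))).
  { unfold Rdiv. rewrite ln_mult, ln_Rinv; try apply Rinv_0_lt_compat; lra. }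
  rewrite E1, E2. apply ln_le_mono. apply Rdiv_lt_0_compat; lra.
  apply Rmult_le_reg_r with ((y1+m)*(y2+m)). nra.
  replace (y1 / (y1 + m) * ((y1 + m) * (y2 + m))) with (y1*(y2+m)) by (field; lra).
  replace (y2 / (y2 + m) * ((y1 + m) * (y2 + m))) with (y2*(y1+m)) by (field; lra). nra.
Qed.

Lemma phi_neg m y : 0 < m -> 0 < y -> phi m y <= 0.
Proof. intros. unfold phi. assert (ln y <= ln (y+m)) by (apply ln_le_mono; lra). lra. Qed.

Lemma phi_bound m y : 0 < m -> 0 < y -> - phi m y <= m / y.
Proof.
  intros Hm Hy. unfold phi.
  replace (- (ln y - ln (y+m))) with (ln (y+m) - ln y) by ring.
  rewrite ln_split by lra. apply L1. assert (0 < m/y) by (apply Rdiv_lt_0_compat; lra). lra.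
Qed.

Lemma phi_step m w h : 0 < m -> 0 < w -> 0 < w + h ->
  phi m (w + h) - phi m w = ln (1 + h/w) - ln (1 + h/(w+m)).
Proof.
  intros Hm Hw Hwh. unfold phi.
  replace (ln (w + h) - ln (w + h + m) - (ln w - ln (w + m))) with
    ((ln (w+h) - ln w) - (ln ((w+m)+h) - ln (w+m))) by (replace (w+h+m) with (w+m+h) by ring; ring).
  rewrite !ln_split by lra. reflexivity.
Qed.

Lemma main_bound delta n kz z : (1 <= n)%nat -> 0 < delta -> 0 < z < 1 ->
  tanh ((1+delta)*z) = z -> (kz < n)%nat ->
  (forall j, (j <= n)%nat -> Rabs (st n kz - z) <= Rabs (st n j - z)) ->
  let a := (1+delta)*z in let kap := 1 - (1+delta)*(1-z^2) in
  let q0 := exp (-2*a - 1) / 4 in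
  let c1 := sqrt (q0 / (INR n * kap)) in
  72 * a^2 <= INR n * kap^3 ->
  Etau (1+delta) n kz <= 72 * INR n / (a * c1).
Proof.
  intros Hn Hd Hz Ht Hkz Hnear a kap q0 c1 H3.
  assert (Hk2 : 2*z^2/3 <= kap <= z^2) by (apply kappa_bounds; auto; lra).
  assert (Hkp : 0 < kap) by nra.
  assert (Ha : z <= a) by (unfold a; nra).
  assert (HnR : 0 < INR n) by (apply lt_0_INR; lia).
  set (h := 2 / INR n).
  assert (Hh : 0 < h) by (unfold h; apply Rdiv_lt_0_compat; lra).
  set (m := kap / a).
  assert (Hm : 0 < m) by (unfold m; apply Rdiv_lt_0_compat; lra).
  assert (Hq0 : 0 < q0 <= 1/4).
  { unfold q0. split. apply Rdiv_lt_0_compat. apply exp_pos. lra.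
    assert (exp (-2*a-1) <= 1). { apply Rle_trans with (exp 0); [apply exp_le; lra| rewrite exp_0; lra]. } lra. }
  assert (Hc1sq : c1^2 = q0 / (INR n * kap)).
  { unfold c1. rewrite <- Rsqr_pow2. apply Rsqr_sqrt. apply Rlt_le, Rdiv_lt_0_compat; nra. }
  assert (Hc1 : 0 < c1) by (unfold c1; apply sqrt_lt_R0; apply Rdiv_lt_0_compat; nra).
  assert (H1 : 3*h/2 <= m).
  { unfold h, m. assert (3*a <= INR n * kap).
    { assert (Hz2 : z^2 <= z) by nra. assert (kap*kap <= kap*1) by (apply Rmult_le_compat_l; lra). assert (kap^2 <= 24*a) by (replace (kap^2) with (kap*kap) by ring; lra).
      assert (3*a*kap^2 <= INR n * kap * kap^2) by nra. 
      apply Rmult_le_reg_r with (kap^2). nra. lra. }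
    apply Rmult_le_reg_r with (INR n * a). nra.
    replace (3 * (2 / INR n) / 2 * (INR n * a)) with (3*a) by (field; lra).
    replace (kap / a * (INR n * a)) with (INR n * kap) by (field; lra). lra. }
  assert (H3' : h <= a*m*m^2/36).
  { unfold h, m. apply Rmult_le_reg_r with (36 * INR n * a^2). apply Rmult_lt_0_compat; [lra| apply pow_lt; lra].
    replace (2 / INR n * (36 * INR n * a^2)) with (72*a^2) by (field; lra).
    replace (a * (kap / a) * (kap / a) ^ 2 / 36 * (36 * INR n * a ^ 2)) with (INR n * kap^3) by (field; lra). lra. }
  assert (H2 : c1 <= 2*m/3).
  { assert (c1^2 <= (2*m/3)^2).
    { rewrite Hc1sq. unfold m. apply Rmult_le_reg_r with (9 * INR n * kap * a^2).
      apply Rmult_lt_0_compat; [apply Rmult_lt_0_compat; lra| apply pow_lt; lra].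
      replace (q0 / (INR n * kap) * (9 * INR n * kap * a ^ 2)) with (9*q0*a^2) by (field; lra).
      replace ((2 * (kap / a) / 3) ^ 2 * (9 * INR n * kap * a ^ 2)) with (4 * (INR n * kap^3)) by (field; lra).
      assert (0 <= a^2) by nra. assert (9*q0*a^2 <= 9*(1/4)*a^2) by (apply Rmult_le_compat_r; lra). lra. }
    assert (0 <= 2*m/3) by lra. nra. }
  set (c := Rmax h c1).
  assert (Hch : h <= c) by apply Rmax_l.
  assert (Hcc1 : c1 <= c) by apply Rmax_r.
  set (w := fun k => st n k - z + c).
  set (A := 72 / (kap * h)).
  assert (HA : 0 < A) by (unfold A; apply Rdiv_lt_0_compat; nra).
  assert (Hukz : - (h/2) <= st n kz - z).
  { assert (H := nearest_kz n kz z Hn Hkz Hnear). unfold h. replace (2 / INR n / 2) with (1/INR n) by (field; lra). lra. }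
  assert (Hwkz : c/2 <= w kz) by (unfold w; lra).
  assert (Hwmono : forall k, (kz <= k)%nat -> w kz <= w k).
  { intros k Hk. unfold w. unfold st. assert (INR kz <= INR k) by (apply le_INR; lia).
    assert (2 * INR kz / INR n <= 2 * INR k / INR n) by (unfold Rdiv; apply Rmult_le_compat_r; [apply Rlt_le, Rinv_0_lt_compat|]; lra).
    lra. }
  assert (Hser := series_bound (1+delta) n kz (fun k => A * (phi m (w k) - phi m (w kz))) Hn ltac:(lia)).
  destruct Hser as [_ [_ Hbound]].
  - intros k Hk. apply Rmult_le_pos. lra. assert (phi m (w kz) <= phi m (w k)) by (apply phi_mono; try lra; apply Hwmono; lia). lra.
  - intros k Hk.
    destruct (model_drift delta n kz z k Hn Hd Hz Ht Hnear Hk) as [Hu [Hp [Hpq [Hdr _]]]].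
    cbv zeta in *. fold a kap in Hdr.
    set (u := st n k - z) in *.
    set (p := pup (1+delta) n k) in *. set (q := pdown (1+delta) n k) in *.
    assert (Hu' : h/2 <= u) by (unfold h; replace (2 / INR n / 2) with (1/INR n) by (field; lra); lra).
    assert (Hwk : w k = u + c) by (unfold w, u; ring).
    assert (HwS : w (S k) = w k + h) by (unfold w, h; rewrite st_S by auto; ring).
    assert (Hwp : w (pred k) = w k + - h).
    { unfold w, h. destruct k. lia. simpl pred. rewrite (st_S n k Hn). ring. }
    assert (Hdr' : a/4*u*(u+m) <= q - p).
    { replace (a/4*u*(u+m)) with (u * (kap + a*u)/4) by (unfold m; field; lra). unfold a. exact Hdr. }
    assert (0 <= a/4*u*(u+m)) by (apply Rmult_le_pos; [apply Rmult_le_pos|]; lra).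
    assert (Hgen := gen_abstract p q h c u m a q0 Hh Hm ltac:(lra) Hch Hu' H1 ltac:(lra) Hpq Hdr' H3').
    assert (Hcase : u < c/2 -> c <= 2*m/3 /\ q0 <= q /\ c^2 = q0*h/(2*(a*m)) /\ 0 < q0).
    { intros Hlt. assert (Hcc : c = c1).
      { unfold c in Hlt |- *. unfold Rmax in *. destruct (Rle_dec h c1). reflexivity. lra. }
      rewrite Hcc. split; [lra|]. split; [|split; [|lra]].
      - assert (Hq := pdown_lower (1+delta) n k Hn ltac:(lia) ltac:(lra) ltac:(unfold u in Hu; 
          assert (0 < 1/INR n) by (apply Rdiv_lt_0_compat; lra); lra)).
        fold q in Hq. eapply Rle_trans; [|exact Hq]. unfold q0. unfold Rdiv. apply Rmult_le_compat_r. lra.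
        apply exp_le.
        assert ((1+delta)*c1 <= 1).
        { assert ((1+delta)*c1 <= (1+delta)*(2*m/3)) by (apply Rmult_le_compat_l; lra).
          assert ((1+delta)*(2*m/3) = 2*kap/(3*z)) by (unfold m, a; field; lra).
          assert (2*kap/(3*z) <= 1). { apply Rmult_le_reg_r with (3*z). lra. 
            replace (2 * kap / (3 * z) * (3 * z)) with (2*kap) by (field; lra). nra. }
          lra. }
        replace (st n k) with (z + u) by (unfold u; ring).
        assert ((1+delta)*u <= (1+delta)*(c1/2)) by (apply Rmult_le_compat_l; lra).
        unfold a. nra.
      - rewrite Hc1sq. unfold h, m. field. repeat split; lra. }
    specialize (Hgen Hcase).
    unfold pstay. fold p q.
    replace (p * (A * (phi m (w (S k)) - phi m (w kz))) + (1 - p - q) * (A * (phi m (w k) - phi m (w kz))) +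
      q * (A * (phi m (w (pred k)) - phi m (w kz)))) with
      (A * (phi m (w k) - phi m (w kz)) + A * (p * (phi m (w (S k)) - phi m (w k)) + q * (phi m (w (pred k)) - phi m (w k)))) by ring.
    rewrite HwS, Hwp, !phi_step, Hwk; try lra.
    replace (- h / (u + c)) with (- (h/(u+c))) by (field; lra).
    replace (- h / (u + c + m)) with (- (h/(u+c+m))) by (field; lra).
    unfold Rminus in Hgen. rewrite !Rplus_assoc in Hgen. 
    assert (A * (a*m*h/72) = 1) by (unfold A, m; field; repeat split; lra).
    assert (HAG : A * (p * (ln (1 + h / (u + c)) - ln (1 + h / (u + c + m))) + q * (ln (1 + - (h / (u + c))) - ln (1 + - (h / (u + c + m))))) <= A * (- (a*m)*h/72)).
    { apply Rmult_le_compat_l. lra. unfold Rminus. rewrite !Rplus_assoc. exact Hgen. }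
    lra.
  -
    eapply Rle_trans. exact Hbound.
    assert (Hn1 : phi m (w n) <= 0) by (apply phi_neg; try lra; assert (w kz <= w n) by (apply Hwmono; lia); lra).
    assert (Hb := phi_bound m (w kz) Hm ltac:(lra)).
    assert (m / w kz <= 2*m/c1).
    { apply Rmult_le_reg_r with (w kz * c1). nra.
      replace (m / w kz * (w kz * c1)) with (m*c1) by (field; lra).
      replace (2 * m / c1 * (w kz * c1)) with (2*m*w kz) by (field; lra). nra. }
    assert (A * (phi m (w n) - phi m (w kz)) <= A * (2*m/c1)) by (apply Rmult_le_compat_l; lra).
    replace (A * (2*m/c1)) with (72 * INR n / (a * c1)) in H0 by (unfold A, m, h; field; repeat split; lra).
    lra.
Qed.

Lemma integrand_eq beta x : -1 < x < 1 ->
  ln ((1 + gfun beta x) / (1 - gfun beta x)) = 2*beta*x - ln (1+x) + ln (1-x).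
Proof.
  intros Hx. unfold gfun. assert (HT := tanh_lt1 (beta*x)).
  assert (Hr := tanh_ratio (beta*x)).
  set (T := tanh (beta*x)) in *.
  assert (Hd : 0 < 1 - x*T) by nra.
  assert (E : (1 + (T - x) / (1 - x * T)) / (1 - (T - x) / (1 - x * T)) = exp (2*(beta*x)) * ((1-x)/(1+x))).
  { rewrite <- Hr. field. repeat split; try lra. intro. nra. }
  rewrite E. rewrite ln_mult, ln_exp. unfold Rdiv. rewrite ln_mult, ln_Rinv. ring.
  lra. lra. apply Rinv_0_lt_compat; lra. apply exp_pos. apply Rdiv_lt_0_compat; lra.
Qed.

Lemma RInt_value beta z : 0 < z < 1 ->
  RInt (fun x => ln ((1 + gfun beta x) / (1 - gfun beta x))) 0 z =
  beta*z^2 - (1+z)*ln(1+z) - (1-z)*ln(1-z).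
Proof.
  intros Hz.
  rewrite (RInt_ext _ (fun x => 2*beta*x - ln (1+x) + ln (1-x))).
  2: { intros x Hx. rewrite Rmin_left, Rmax_right in Hx by lra. apply integrand_eq. lra. }
  apply is_RInt_unique.
  set (F := fun x => beta*x^2 - (1+x)*ln(1+x) - (1-x)*ln(1-x)).
  replace (beta*z^2 - (1+z)*ln(1+z) - (1-z)*ln(1-z)) with (minus (F z) (F 0)).
  2: { unfold F, minus, plus, opp. simpl. rewrite Rplus_0_r, Rminus_0_r, ln_1. ring. }
  apply (@is_RInt_derive R_CompleteNormedModule F (fun x => 2*beta*x - ln (1+x) + ln (1-x)) 0 z).
  - intros x Hx. rewrite Rmin_left, Rmax_right in Hx by lra. unfold F. auto_derive.
    repeat split; lra. unfold Rminus. field. split; lra.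
  - intros x Hx. rewrite Rmin_left, Rmax_right in Hx by lra.
    apply (@ex_derive_continuous R_AbsRing R_NormedModule). auto_derive. repeat split; lra.
Qed.

Lemma I_lower beta z : 0 < z < 1 -> tanh (beta*z) = z ->
  z^4/6 <= RInt (fun x => ln ((1 + gfun beta x) / (1 - gfun beta x))) 0 z.
Proof.
  intros Hz Ht. rewrite RInt_value by auto.
  assert (H := twoa (beta*z) z Hz Ht). assert (H2 := I_bound z ltac:(lra)).
  replace (beta*z^2) with (z*(beta*z)) by ring.
  assert (Hbz : beta*z = (ln (1+z) - ln (1-z))/2) by lra. rewrite Hbz.
  replace (z * ((ln (1 + z) - ln (1 - z)) / 2) - (1 + z) * ln (1 + z) - (1 - z) * ln (1 - z))
    with (-(1+z/2)*ln(1+z) - (1-z/2)*ln(1-z)) by field. exact H2.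
Qed.

Lemma one_minus_z n kz z : (1 <= n)%nat -> (kz < n)%nat -> z < 1 ->
  (forall j, (j <= n)%nat -> Rabs (st n kz - z) <= Rabs (st n j - z)) ->
  1 / INR n <= 1 - z.
Proof.
  intros Hn Hkz Hz Hnear. assert (H := Hnear n ltac:(lia)). rewrite st_n in H by auto.
  rewrite (Rabs_right (1 - z)) in H by lra.
  assert (HnR : 0 < INR n) by (apply lt_0_INR; lia).
  assert (Hs : st n kz <= 1 - 2 / INR n).
  { unfold st. assert (INR kz <= INR n - 1).
    { assert (INR (S kz) <= INR n) by (apply le_INR; lia). rewrite S_INR in H0. lra. }
    assert (2 * INR kz / INR n <= 2 * (INR n - 1) / INR n).
    { unfold Rdiv. apply Rmult_le_compat_r. apply Rlt_le, Rinv_0_lt_compat; lra. lra. }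
    replace (2 * (INR n - 1) / INR n) with (2 - 2/INR n) in H1 by (field; lra). lra. }
  assert (0 < 1/INR n) by (apply Rdiv_lt_0_compat; lra).
  replace (2 / INR n) with (2 * (1/INR n)) in Hs by (field; lra).
  destruct (Rle_or_lt z (st n kz)).
  - lra.
  - rewrite Rabs_left in H by lra. lra.
Qed.

Lemma exp_neg_bound1 X : 0 < X -> exp (-(X/6)) <= 144 / X^2.
Proof.
  intros HX. rewrite exp_Ropp. assert (H := exp_ge_sq (X/6) ltac:(lra)).
  assert (0 < (X/6)^2/4) by (apply Rdiv_lt_0_compat; [apply pow_lt|]; lra).
  replace (144 / X^2) with (/ ((X/6)^2/4)) by (field; lra).
  apply Rinv_le_contravar; lra.
Qed.

Lemma exp_neg_bound2 y : 0 < y -> exp (-y) <= 16777216 / y^8.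
Proof.
  intros Hy. rewrite exp_Ropp.
  assert (H := exp_ge_4 (y/2) ltac:(lra)).
  assert (E : exp y = exp (y/2) * exp (y/2)) by (rewrite <- exp_plus; f_equal; field).
  assert (0 < (y/2)^4/256) by (apply Rdiv_lt_0_compat; [apply pow_lt|]; lra).
  assert (((y/2)^4/256) * ((y/2)^4/256) <= exp y) by (rewrite E; apply Rmult_le_compat; lra).
  replace (16777216 / y^8) with (/ (((y/2)^4/256) * ((y/2)^4/256))) by (field; lra).
  apply Rinv_le_contravar. nra. lra.
Qed.

Lemma ratio_small delta n kz z eps : (1 <= n)%nat -> 0 < delta -> 0 < z < 1 ->
  tanh ((1+delta)*z) = z -> (kz < n)%nat ->
  (forall j, (j <= n)%nat -> Rabs (st n kz - z) <= Rabs (st n j - z)) -> 0 < eps ->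
  (z <= 1/2 -> 300 <= INR n * z^4 /\ 5308416 / eps^2 < INR n * z^4) ->
  (1/2 < z -> 7739670528 <= INR n /\ 124416 * (96^8 * 16777216) / eps^2 < INR n) ->
  Etau (1+delta) n kz / texp delta n z < eps.
Proof.
  intros Hn Hd Hz Ht Hkz Hnear Heps Hc1 Hc2.
  set (a := (1+delta)*z). set (kap := 1 - (1+delta)*(1-z^2)).
  set (q0 := exp (-2*a - 1) / 4). set (c1 := sqrt (q0 / (INR n * kap))).
  destruct (kappa_bounds (1+delta) z Hz ltac:(lra) Ht) as [[Hk1 Hk2] Hdel].
  fold kap in Hk1, Hk2.
  assert (HnR : 0 < INR n) by (apply lt_0_INR; lia).
  assert (Ha : z <= a) by (unfold a; nra).
  assert (Hkp : 0 < kap) by nra.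
  assert (Hz2 : 0 < 1 - z^2) by nra.
  assert (Hbb := beta_bound (1+delta) z Hz Ht). fold a in Hbb.
  assert (He2a : exp (2*a) = (1+z)/(1-z)) by (apply exp2a; auto).
  assert (Hreg : 72 * a^2 <= INR n * kap^3).
  { destruct (Rle_or_lt z (1/2)) as [Hh|Hh].
    - destruct (Hc1 Hh) as [HX _].
      assert (z^3/(3*(1-z^2)) <= z/9).
      { apply Rmult_le_reg_r with (9*(1-z^2)). lra.
        replace (z ^ 3 / (3 * (1 - z ^ 2)) * (9 * (1 - z ^ 2))) with (3*z^3) by (field; lra).
        replace (z / 9 * (9 * (1 - z ^ 2))) with (z*(1-z^2)) by field. nra. }
      assert (Ha2 : a^2 <= 100/81*z^2) by nra.
      assert (Hk3 : (2*z^2/3)^3 <= kap^3) by (apply pow_incr; split; nra).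
      assert (INR n * (2*z^2/3)^3 <= INR n * kap^3) by (apply Rmult_le_compat_l; lra).
      assert (INR n * (2*z^2/3)^3 = 8/27 * z^2 * (INR n * z^4)) by field.
      assert (8/27*z^2*300 <= 8/27 * z^2 * (INR n * z^4)) by (apply Rmult_le_compat_l; nra).
      nra.
    - destruct (Hc2 Hh) as [HN _].
      assert (H1z := one_minus_z n kz z Hn Hkz ltac:(lra) Hnear).
      assert (He : exp (2*a) <= 2 * INR n).
      { rewrite He2a. apply Rmult_le_reg_r with (1-z). lra.
        replace ((1 + z) / (1 - z) * (1 - z)) with (1+z) by (field; lra).
        assert (1 <= INR n * (1-z)).
        { apply Rmult_le_reg_r with (/ INR n). apply Rinv_0_lt_compat; lra.
          replace (INR n * (1-z) * / INR n) with (1-z) by (field; lra). unfold Rdiv in H1z. lra. }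
        lra. }
      assert (He4 := exp_ge_4 (2*a) ltac:(lra)).
      assert (Ha4 : a^4 <= 32 * INR n) by lra.
      assert (Hsq : (15552 * a^2)^2 <= INR n * INR n).
      { replace ((15552 * a^2)^2) with (15552^2 * a^4) by ring.
        assert (15552^2 * a^4 <= 15552^2 * (32 * INR n)) by (apply Rmult_le_compat_l; lra).
        assert (15552^2 * 32 * INR n <= INR n * INR n) by (apply Rmult_le_compat_r; lra). lra. }
      assert (H15 : 15552 * a^2 <= INR n).
      { assert (0 <= 15552 * a^2) by nra. nra. }
      assert (Hk3 : (1/6)^3 <= kap^3) by (apply pow_incr; split; nra).
      assert (INR n * (1/6)^3 <= INR n * kap^3) by (apply Rmult_le_compat_l; lra).
      lra. }
  assert (Hmain := main_bound delta n kz z Hn Hd Hz Ht Hkz Hnear). cbv zeta in Hmain.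
  fold a kap q0 c1 in Hmain. specialize (Hmain Hreg).
  destruct (ex_series_case delta n kz z Hn Hd Hz Ht ltac:(lia) Hnear) as [_ Hnon].
  assert (HI := I_lower (1+delta) z Hz Ht).
  set (I := RInt (fun x => ln ((1 + gfun (1 + delta) x) / (1 - gfun (1 + delta) x))) 0 z) in *.
  set (E := exp (INR n / 2 * I)).
  assert (HE : 0 < E) by apply exp_pos.
  assert (Htexp : texp delta n z = INR n / delta * E) by reflexivity.
  assert (Hq0 : 0 < q0) by (unfold q0; apply Rdiv_lt_0_compat; [apply exp_pos|lra]).
  assert (Hc1sq : c1^2 = q0 / (INR n * kap)).
  { unfold c1. rewrite <- Rsqr_pow2. apply Rsqr_sqrt. apply Rlt_le, Rdiv_lt_0_compat; nra. }
  assert (Hc1p : 0 < c1) by (unfold c1; apply sqrt_lt_R0; apply Rdiv_lt_0_compat; nra).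
  set (K := 72 * delta / (a * c1 * E)).
  assert (HK0 : 0 <= K) by (unfold K; apply Rdiv_le_0_compat; [lra| apply Rmult_lt_0_compat; [apply Rmult_lt_0_compat|]; lra]).
  assert (Hratio : Etau (1+delta) n kz / texp delta n z <= K).
  { rewrite Htexp. apply Rle_trans with ((72 * INR n / (a * c1)) / (INR n / delta * E)).
    - unfold Rdiv at 1 3. apply Rmult_le_compat_r. apply Rlt_le, Rinv_0_lt_compat.
      apply Rmult_lt_0_compat; [apply Rdiv_lt_0_compat|]; lra. exact Hmain.
    - unfold K. right. field. repeat split; lra. }
  assert (HE2 : E^2 = exp (INR n * I)).
  { unfold E. rewrite <- Rsqr_pow2. unfold Rsqr. rewrite <- exp_plus. f_equal. field. }
  assert (Hq0inv : / q0 = 4 * exp 1 * ((1+z)/(1-z))).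
  { unfold q0. rewrite <- He2a. replace (-2*a - 1) with (-(2*a + 1)) by ring. rewrite exp_Ropp.
    rewrite exp_plus. field. split; apply Rgt_not_eq, exp_pos. }
  assert (HK2 : K^2 = 5184 * delta^2 * (kap / a^2) * INR n * (4 * exp 1 * ((1+z)/(1-z))) * exp (- (INR n * I))).
  { rewrite <- Hq0inv. rewrite exp_Ropp, <- HE2. unfold K.
    replace ((72 * delta / (a * c1 * E))^2) with (5184 * delta^2 / (a^2 * c1^2 * E^2)) by (field; repeat split; lra).
    rewrite Hc1sq. field. repeat split; try lra. }
  assert (Hf1 : 0 <= kap / a^2 <= 1).
  { split. apply Rdiv_le_0_compat; [lra| apply pow_lt; lra].
    apply Rmult_le_reg_r with (a^2). apply pow_lt; lra.
    replace (kap / a^2 * a^2) with kap by (field; lra). nra. }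
  assert (Hf2 : exp (- (INR n * I)) <= exp (- (INR n * z^4 / 6))).
  { apply exp_le. assert (INR n * (z^4/6) <= INR n * I) by (apply Rmult_le_compat_l; lra). lra. }
  assert (Hd2 : 0 <= delta^2 <= (z^2/(3*(1-z^2)))^2) by (split; [nra| apply pow_incr; lra]).
  assert (He1 : exp 1 <= 3) by apply exp_le_3.
  assert (He1p : 0 < exp 1) by apply exp_pos.
  assert (Hfz : 0 < (1+z)/(1-z)) by (apply Rdiv_lt_0_compat; lra).
  assert (Hexp0 : 0 < exp (- (INR n * I))) by apply exp_pos.
  assert (HKsq : K^2 <= 5184 * (z^2/(3*(1-z^2)))^2 * INR n * (12 * ((1+z)/(1-z))) * exp (- (INR n * z^4 / 6))).
  { rewrite HK2.
    assert (A1 : 5184 * delta^2 * (kap / a^2) <= 5184 * (z^2/(3*(1-z^2)))^2).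
    { assert (delta^2 * (kap/a^2) <= delta^2 * 1) by (apply Rmult_le_compat_l; lra). nra. }
    assert (A2 : 4 * exp 1 * ((1+z)/(1-z)) <= 12 * ((1+z)/(1-z))) by nra.
    assert (A0 : 0 <= 5184 * delta^2 * (kap / a^2)) by (apply Rmult_le_pos; nra).
    assert (B1 : 5184 * delta^2 * (kap / a^2) * INR n * (4 * exp 1 * ((1+z)/(1-z)))
              <= 5184 * (z^2/(3*(1-z^2)))^2 * INR n * (12 * ((1+z)/(1-z)))).
    { apply Rmult_le_compat.
      - apply Rmult_le_pos; lra.
      - apply Rmult_le_pos; [apply Rmult_le_pos|]; lra.
      - apply Rmult_le_compat_r; lra.
      - exact A2. }
    apply Rmult_le_compat.
    - apply Rmult_le_pos; [apply Rmult_le_pos|]; [lra|lra|]. apply Rmult_le_pos; [apply Rmult_le_pos|]; lra.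
    - lra.
    - exact B1.
    - exact Hf2. }
  assert (HKlt : K^2 < eps^2).
  { destruct (Rle_or_lt z (1/2)) as [Hh|Hh].
    - destruct (Hc1 Hh) as [HX1 HX2]. set (X := INR n * z^4) in *.
      assert (HXp : 0 < X) by lra.
      assert (Hb1 : (z^2/(3*(1-z^2)))^2 <= 16/81 * z^4).
      { replace ((z^2/(3*(1-z^2)))^2) with (z^4 / (9*(1-z^2)^2)) by (field; lra).
        apply Rmult_le_reg_r with (9*(1-z^2)^2). nra.
        replace (z ^ 4 / (9 * (1 - z ^ 2) ^ 2) * (9 * (1 - z ^ 2) ^ 2)) with (z^4) by (field; lra).
        assert (z^2 <= 1/4) by nra. assert (3/4 <= 1 - z^2) by lra.
        assert (9/16 <= (1-z^2)^2) by nra.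
        assert (0 <= z^4) by nra.
        assert (z^4 * (9/16) <= z^4*(1-z^2)^2) by (apply Rmult_le_compat_l; lra). lra. }
      assert (Hb2 : (1+z)/(1-z) <= 3).
      { apply Rmult_le_reg_r with (1-z). lra. replace ((1 + z) / (1 - z) * (1 - z)) with (1+z) by (field; lra). lra. }
      assert (Hb3 : exp (- (INR n * z^4 / 6)) <= 144 / X^2).
      { replace (- (INR n * z^4 / 6)) with (-(X/6)) by (unfold X; field). apply exp_neg_bound1; lra. }
      assert (Hprod : 5184 * (z^2/(3*(1-z^2)))^2 * INR n * (12 * ((1+z)/(1-z))) * exp (- (INR n * z^4 / 6))
          <= 5184 * (16/81 * z^4) * INR n * (12 * 3) * (144 / X^2)).
      { assert (0 <= (z^2/(3*(1-z^2)))^2) by apply pow2_ge_0.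
        apply Rmult_le_compat.
        - apply Rmult_le_pos; [apply Rmult_le_pos; [apply Rmult_le_pos|]|]; lra.
        - apply Rlt_le, exp_pos.
        - apply Rmult_le_compat.
          + apply Rmult_le_pos; [apply Rmult_le_pos|]; lra.
          + lra.
          + apply Rmult_le_compat_r. lra. apply Rmult_le_compat_l; lra.
          + lra.
        - exact Hb3. }
      fold X in Hprod.
      replace (5184 * (16/81 * z^4) * INR n * (12 * 3) * (144 / X^2)) with (5308416 / X) in Hprod by (unfold X; field; nra).
      assert (5308416 / X < eps^2).
      { apply Rmult_lt_reg_r with X. lra. replace (5308416 / X * X) with 5308416 by (field; lra).
        apply Rmult_lt_reg_r with (/ eps^2). apply Rinv_0_lt_compat, pow_lt; lra.
        replace (eps^2 * X * / eps^2) with X by (field; lra). unfold Rdiv in HX2. lra. }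
      lra.
    - destruct (Hc2 Hh) as [HN1 HN2].
      assert (H1z := one_minus_z n kz z Hn Hkz ltac:(lra) Hnear).
      assert (Hinv : 1 <= INR n * (1-z)).
      { apply Rmult_le_reg_r with (/ INR n). apply Rinv_0_lt_compat; lra.
        replace (INR n * (1-z) * / INR n) with (1-z) by (field; lra). unfold Rdiv in H1z. lra. }
      assert (Hb1 : (z^2/(3*(1-z^2)))^2 <= INR n ^ 2).
      { assert (1 <= INR n * (1 - z^2)) by nra.
        apply Rmult_le_reg_r with ((3*(1-z^2))^2). nra.
        replace ((z ^ 2 / (3 * (1 - z ^ 2))) ^ 2 * (3 * (1 - z ^ 2)) ^ 2) with (z^4) by (field; lra).
        assert (z^4 <= 1) by nra. 
        assert (1 <= (INR n * (1-z^2))^2) by nra. nra. }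
      assert (Hb2 : (1+z)/(1-z) <= 2 * INR n).
      { apply Rmult_le_reg_r with (1-z). lra. replace ((1 + z) / (1 - z) * (1 - z)) with (1+z) by (field; lra). nra. }
      assert (Hb3 : exp (- (INR n * z^4 / 6)) <= 16777216 / (INR n / 96)^8).
      { apply Rle_trans with (exp (- (INR n / 96))).
        apply exp_le. assert (1/4 <= z^2) by nra. assert (z^4 = z^2*z^2) by ring. assert (1/16 <= z^4) by nra.
        assert (INR n * (1/16) <= INR n * z^4) by (apply Rmult_le_compat_l; lra). lra.
        apply exp_neg_bound2. lra. }
      assert (Hprod : 5184 * (z^2/(3*(1-z^2)))^2 * INR n * (12 * ((1+z)/(1-z))) * exp (- (INR n * z^4 / 6))
          <= 5184 * (INR n ^ 2) * INR n * (12 * (2 * INR n)) * (16777216 / (INR n / 96)^8)).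
      { assert (0 <= (z^2/(3*(1-z^2)))^2) by apply pow2_ge_0.
        apply Rmult_le_compat.
        - apply Rmult_le_pos; [apply Rmult_le_pos; [apply Rmult_le_pos|]|]; lra.
        - apply Rlt_le, exp_pos.
        - apply Rmult_le_compat.
          + apply Rmult_le_pos; [apply Rmult_le_pos|]; lra.
          + lra.
          + apply Rmult_le_compat_r. lra. apply Rmult_le_compat_l; lra.
          + lra.
        - exact Hb3. }
      replace (5184 * (INR n ^ 2) * INR n * (12 * (2 * INR n)) * (16777216 / (INR n / 96)^8))
        with (124416 * (96^8 * 16777216) / INR n ^ 4) in Hprod by (field; lra).
      assert (Hn4 : INR n <= INR n ^ 4).
      { assert (1 <= INR n) by lra. 
        replace (INR n ^ 4) with (INR n * (INR n * INR n * INR n)) by ring.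
        assert (1 <= INR n * INR n * INR n) by (assert (1 <= INR n * INR n) by nra; nra). nra. }
      assert (124416 * (96^8 * 16777216) / INR n ^ 4 < eps^2).
      { apply Rmult_lt_reg_r with (INR n ^ 4). apply pow_lt; lra.
        replace (124416 * (96^8 * 16777216) / INR n ^ 4 * INR n ^ 4) with (124416 * (96^8 * 16777216)) by (field; lra).
        assert (124416 * (96^8 * 16777216) < eps^2 * INR n).
        { apply Rmult_lt_reg_r with (/ eps^2). apply Rinv_0_lt_compat, pow_lt; lra.
          replace (eps^2 * INR n * / eps^2) with (INR n) by (field; lra). unfold Rdiv in HN2. lra. }
        assert (eps^2 * INR n <= eps^2 * INR n ^ 4) by (apply Rmult_le_compat_l; nra). lra. }
      lra. }
  assert (K < eps) by nra. lra.
Qed.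

Lemma Etau_zero beta n : (1 <= n)%nat -> Etau beta n n <= 0.
Proof.
  intros Hn. destruct (series_bound beta n n (fun _ => 0) Hn ltac:(lia)) as [_ [_ H]].
  - intros; lra.
  - intros k Hk. lia.
  - exact H.
Qed.

Theorem lemma6p4
  (delta : nat -> R)
  (zstar : nat -> R)   (* the unique positive root of g, for beta = 1 + delta n *)
  (kz : nat -> nat)    (* index of the state nearest to zstar n *)
  (Hdelta_pos : forall n, 0 < delta n)
  (Hdelta_lim : is_lim_seq (fun n => (delta n) ^ 2 * INR n) p_infty)
  (Hroot : forall n, 0 < zstar n < 1 /\ gfun (1 + delta n) (zstar n) = 0)
  (Hkz : forall n, (kz n <= n)%nat /\
     forall j, (j <= n)%nat -> Rabs (st n (kz n) - zstar n) <= Rabs (st n j - zstar n)) :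
  (forall n, (1 <= n)%nat -> ex_series (surv (1 + delta n) n (kz n))) /\
  is_lim_seq (fun n => Etau (1 + delta n) n (kz n) / texp (delta n) n (zstar n)) 0.
Proof.
  assert (Htanh : forall n, tanh ((1 + delta n) * zstar n) = zstar n).
  { intros n. destruct (Hroot n) as [Hz Hg]. apply root_tanh; auto. }
  split.
  - intros n Hn. destruct (Hroot n) as [Hz _]. destruct (Hkz n) as [Hk Hnear].
    apply (ex_series_case (delta n) n (kz n) (zstar n) Hn (Hdelta_pos n) Hz (Htanh n) Hk Hnear).
  - apply is_lim_seq_spec. intros eps.
    assert (Heps : 0 < eps) by (destruct eps; simpl; lra).
    set (M := 60 + 5308416 / (5 * eps^2)).
    set (B := 7739670528 + 124416 * (96^8 * 16777216) / eps^2).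
    apply is_lim_seq_spec in Hdelta_lim. destruct (Hdelta_lim M) as [N1 HN1].
    assert (HI := is_lim_seq_INR). apply is_lim_seq_spec in HI. destruct (HI B) as [N2 HN2].
    exists (max 1 (max N1 N2)). intros n Hn.
    assert (Hn1 : (1 <= n)%nat) by lia.
    specialize (HN1 n ltac:(lia)). specialize (HN2 n ltac:(lia)). simpl in HN1, HN2.
    destruct (Hroot n) as [Hz _]. destruct (Hkz n) as [Hk Hnear].
    set (d := delta n) in *. set (z := zstar n) in *.
    assert (Hd := Hdelta_pos n). fold d in Hd.
    assert (HnR : 0 < INR n) by (apply lt_0_INR; lia).
    assert (Htexp : 0 < texp d n z).
    { unfold texp. apply Rmult_lt_0_compat. apply Rdiv_lt_0_compat; lra. apply exp_pos. }
    destruct (ex_series_case d n (kz n) z Hn1 Hd Hz (Htanh n) Hk Hnear) as [_ Hnon].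
    assert (Hr0 : 0 <= Etau (1 + d) n (kz n) / texp d n z) by (apply Rdiv_le_0_compat; lra).
    rewrite Rminus_0_r, Rabs_right by lra.
    destruct (Nat.eq_dec (kz n) n) as [E|E].
    + rewrite E. assert (H0 := Etau_zero (1+d) n Hn1).
      assert (Etau (1 + d) n n / texp d n z <= 0).
      { unfold Rdiv. assert (0 < / texp d n z) by (apply Rinv_0_lt_compat; lra). nra. }
      lra.
    + apply (ratio_small d n (kz n) z eps Hn1 Hd Hz (Htanh n) ltac:(lia) Hnear Heps).
      * intros Hh.
        destruct (kappa_bounds (1+d) z Hz ltac:(lra) (Htanh n)) as [_ Hdel].
        assert (Hz2 : 3/4 <= 1 - z^2) by nra.
        assert (H1 : 9/4 * d <= z^2).
        { apply Rmult_le_reg_r with (/(3*(1-z^2))). apply Rinv_0_lt_compat; lra.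
          replace (z^2 * / (3 * (1 - z^2))) with (z^2/(3*(1-z^2))) by reflexivity.
          assert (d <= z^2/(3*(1-z^2))) by lra.
          assert (9/4*d * / (3*(1-z^2)) <= d).
          { apply Rmult_le_reg_r with (3*(1-z^2)). lra.
            replace (9 / 4 * d * / (3 * (1 - z ^ 2)) * (3 * (1 - z ^ 2))) with (9/4*d) by (field; lra). nra. }
          lra. }
        assert (H2 : 5 * d^2 <= z^4).
        { assert ((9/4*d)^2 <= (z^2)^2) by (apply pow_incr; lra). 
          replace ((z^2)^2) with (z^4) in H by ring. nra. }
        assert (H3 : 5 * (d^2 * INR n) <= INR n * z^4) by nra.
        unfold M in HN1.
        assert (0 < 5308416 / (5 * eps^2)) by (apply Rdiv_lt_0_compat; [lra| apply Rmult_lt_0_compat; [lra| apply pow_lt; lra]]).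
        split. lra.
        replace (5308416 / eps ^ 2) with (5 * (5308416 / (5 * eps^2))) by (field; lra). lra.
      * intros Hh. unfold B in HN2.
        assert (0 < 124416 * (96 ^ 8 * 16777216) / eps ^ 2) by (apply Rdiv_lt_0_compat; [lra| apply pow_lt; lra]).
        split; lra.
Qed.
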